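(* For $\sigma>0$ let $\mathcal H_\sigma$ denote the RKHS of the Gaussian kernel $k_\sigma(x,y) = \exp(-\|x-y\|^2/(2\sigma^2))$ on $\mathbb R^d$, with norm $\|\cdot\|_\sigma$. Let $x_1,\dots,x_n\in\mathbb R^d$, $a,b\in\mathbb R^n$, $f = \sum_{i=1}^n a_i k_\sigma(x_i,\cdot)$ and $g = \sum_{i=1}^n b_i k_\sigma(x_i,\cdot)$. Let $K$ be the $n\times n$ matrix with $K_{ij} = k_{\sqrt2\sigma}(x_i,x_j)$, and let $D_a = \operatorname{diag}(a)$, $D_b = \operatorname{diag}(b)$. Then $$\|fg\|_{\sigma/\sqrt2}^2 = \operatorname{tr}\big((D_aK)^2(D_bK)^2\big).$$ *)

(* Defs.v *)
From HB Require Import structures.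
From mathcomp Require Import all_boot all_order all_algebra.
From mathcomp Require Import reals.
From mathcomp.analysis Require Import sequences exp.
Set Implicit Arguments. Unset Strict Implicit. Unset Printing Implicit Defensive.
Import Order.TTheory GRing.Theory Num.Theory.
Local Open Scope ring_scope.

Definition sqdist (R : realType) (d : nat) (x y : 'rV[R]_d) : R :=
  \sum_(k < d) (x ord0 k - y ord0 k) ^+ 2.

Definition gauss (R : realType) (d : nat) (s : R) (x y : 'rV[R]_d) : R :=
  expR (- sqdist x y / (2 * s ^+ 2)).

Record is_RKHS (R : realType) (X : Type) (k : X -> X -> R)
    (H : (X -> R) -> Prop) (ip : (X -> R) -> (X -> R) -> R) : Prop := {
  rkhs_zero : H (fun _ => 0);
  rkhs_add : forall f g, H f -> H g -> H (fun x => f x + g x);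
  rkhs_scale : forall (c : R) f, H f -> H (fun x => c * f x);
  rkhs_sym : forall f g, H f -> H g -> ip f g = ip g f;
  rkhs_lin : forall (c : R) f g h, H f -> H g -> H h ->
      ip (fun x => c * f x + g x) h = c * ip f h + ip g h;
  rkhs_pos : forall f, H f -> 0 <= ip f f;
  rkhs_def : forall f, H f -> ip f f = 0 -> f = (fun _ => 0);
  rkhs_complete : forall u : nat -> X -> R, (forall m, H (u m)) ->
      (forall e : R, 0 < e -> exists N, forall m p, (N <= m)%N -> (N <= p)%N ->
          ip (fun x => u m x - u p x) (fun x => u m x - u p x) < e) ->
      exists2 h, H h & forall e : R, 0 < e -> exists N, forall m, (N <= m)%N ->
          ip (fun x => u m x - h x) (fun x => u m x - h x) < e;
  rkhs_section : forall x, H (k x);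
  rkhs_reproducing : forall f x, H f -> ip f (k x) = f x
}.

(* Main.v *)
Require Import Defs.
From HB Require Import structures.
From mathcomp Require Import all_boot all_order all_algebra.
From mathcomp Require Import reals.
From mathcomp.analysis Require Import sequences exp.
From mathcomp Require Import ring lra.
From mathcomp Require Import boolp.
Import Order.TTheory GRing.Theory Num.Theory.
Local Open Scope ring_scope.

Section S.
Variables (R : realType) (d : nat) (sigma : R).
Hypothesis hsigma : 0 < sigma.

Let s2 := sigma / Num.sqrt 2.
Let mid (u v : 'rV[R]_d) : 'rV[R]_d := 2^-1 *: (u + v).

Lemma den1 : 2 * (Num.sqrt 2 * sigma) ^+ 2 = 4 * sigma ^+ 2 :> R.
Proof. by rewrite exprMn sqr_sqrtr ?ler0n //; ring. Qed.
Lemma den2 : 2 * s2 ^+ 2 = sigma ^+ 2.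
Proof.
have h2 : Num.sqrt 2 != 0 :> R by rewrite gt_eqF // sqrtr_gt0 ltr0n.
rewrite /s2 expr_div_n sqr_sqrtr ?ler0n //; by field.
Qed.

Lemma key1 (u v z : 'rV[R]_d) :
  gauss sigma u z * gauss sigma v z =
  gauss (Num.sqrt 2 * sigma) u v * gauss s2 (mid u v) z.
Proof.
have s0 : sigma != 0 by rewrite gt_eqF.
rewrite /gauss -!expRD den1 den2; congr expR.
rewrite /sqdist !mulNr !mulr_suml -!sumrN -!big_split /=.
apply: eq_bigr => c _; rewrite !mxE; by field.
Qed.

Lemma key2 (u v w y : 'rV[R]_d) :
  gauss (Num.sqrt 2 * sigma) u v * gauss (Num.sqrt 2 * sigma) w y *
     gauss s2 (mid w y) (mid u v) =
  gauss (Num.sqrt 2 * sigma) u w * gauss (Num.sqrt 2 * sigma) w v *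
  gauss (Num.sqrt 2 * sigma) v y * gauss (Num.sqrt 2 * sigma) y u.
Proof.
have s0 : sigma != 0 by rewrite gt_eqF.
rewrite /gauss -!expRD den1 den2; congr expR.
rewrite /sqdist !mulNr !mulr_suml -!sumrN -!big_split /=.
apply: eq_bigr => c _; rewrite !mxE; by field.
Qed.
End S.

Section RK.
Variables (R : realType) (X : Type) (k : X -> X -> R)
  (H : (X -> R) -> Prop) (ip : (X -> R) -> (X -> R) -> R).
Hypothesis HR : is_RKHS k H ip.

Lemma H_sum (I : Type) (r : seq I) (F : I -> X -> R) :
  (forall i, H (F i)) -> H (fun z => \sum_(i <- r) F i z).
Proof.
move=> HF; elim: r => [|i r IH].
  have -> : (fun z => \sum_(i <- [::]) F i z) = (fun _ => 0).
    by apply: funext => z; rewrite big_nil.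
  exact: rkhs_zero HR.
have -> : (fun z => \sum_(j <- i :: r) F j z) =
          (fun z => F i z + \sum_(j <- r) F j z).
  by apply: funext => z; rewrite big_cons.
exact: rkhs_add HR _ _ (HF i) IH.
Qed.

Lemma ip0 h : H h -> ip (fun _ => 0) h = 0.
Proof.
move=> Hh.
have := rkhs_lin HR 1 (rkhs_zero HR) (rkhs_zero HR) Hh.
have -> : (fun _ : X => 1 * 0 + 0) = (fun _ => 0 : R).
  by apply: funext => z; rewrite mulr0 addr0.
rewrite mul1r => e; lra.
Qed.

Lemma ip_sum (I : Type) (r : seq I) (F : I -> X -> R) h :
  (forall i, H (F i)) -> H h ->
  ip (fun z => \sum_(i <- r) F i z) h = \sum_(i <- r) ip (F i) h.
Proof.
move=> HF Hh; elim: r => [|i r IH].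
  have -> : (fun z => \sum_(i <- [::]) F i z) = (fun _ => 0).
    by apply: funext => z; rewrite big_nil.
  by rewrite big_nil ip0.
have -> : (fun z => \sum_(j <- i :: r) F j z) =
          (fun z => 1 * F i z + \sum_(j <- r) F j z).
  by apply: funext => z; rewrite big_cons mul1r.
by rewrite (rkhs_lin HR) // ?big_cons ?mul1r ?IH //; apply: H_sum.
Qed.

Lemma ip_scale c F h : H F -> H h -> ip (fun z => c * F z) h = c * ip F h.
Proof.
move=> HF Hh.
have := rkhs_lin HR c HF (rkhs_zero HR) Hh.
have -> : (fun z => c * F z + 0) = (fun z => c * F z) by apply: funext => z; rewrite addr0.
by rewrite ip0 // addr0.
Qed.
End RK.

Theorem corollary4 (R : realType) (d n : nat) (sigma : R) (hsigma : 0 < sigma)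
    (x : 'I_n -> 'rV[R]_d) (a b : 'I_n -> R)
    (H : ('rV[R]_d -> R) -> Prop) (ip : ('rV[R]_d -> R) -> ('rV[R]_d -> R) -> R) :
  is_RKHS (@gauss R d (sigma / Num.sqrt 2)) H ip ->
  let f := fun z => \sum_(i < n) a i * gauss sigma (x i) z in
  let g := fun z => \sum_(i < n) b i * gauss sigma (x i) z in
  let fg := fun z => f z * g z in
  let K := \matrix_(i < n, j < n) gauss (Num.sqrt 2 * sigma) (x i) (x j) in
  let Da := diag_mx (\row_(i < n) a i) in
  let Db := diag_mx (\row_(i < n) b i) in
  H fg /\
  ip fg fg = \tr ((Da *m K) *m (Da *m K) *m ((Db *m K) *m (Db *m K))).
Proof.
move=> HR f g fg K Da Db.
set s2 := sigma / Num.sqrt 2.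
pose m i j : 'rV[R]_d := 2^-1 *: (x i + x j).
pose c i j := a i * b j * K i j.
pose Fi i := fun z => \sum_(j < n) c i j * gauss s2 (m i j) z.
have efg : fg = fun z => \sum_(i < n) Fi i z.
  apply: funext => z; rewrite /fg /f /g /Fi mulr_suml; apply: eq_bigr => i _.
  rewrite mulr_sumr; apply: eq_bigr => j _.
  rewrite /c !mxE /m.
  transitivity (a i * b j * (gauss sigma (x i) z * gauss sigma (x j) z)); first ring.
  by rewrite (@key1 R d sigma hsigma) /= mulrA.
have HFi i : H (Fi i).
  rewrite /Fi; apply: (@H_sum R _ _ H ip HR _ _ (fun j z => c i j * gauss s2 (m i j) z)) => j; exact: (rkhs_scale HR _ (rkhs_section HR _)).
have Hfg : H fg by rewrite efg; exact: (@H_sum R _ _ H ip HR _ _ Fi).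
split => //.
rewrite {1}efg (@ip_sum R _ _ H ip HR _ _ Fi) //.
have -> : \tr ((Da *m K) *m (Da *m K) *m ((Db *m K) *m (Db *m K))) =
  \sum_(i < n) \sum_(j < n) c i j * fg (m i j).
  rewrite /mxtrace; apply: eq_bigr => i _.
  rewrite mxE; apply: eq_bigr => j _.
  rewrite efg /Fi /Da /Db !mul_diag_mx.
  rewrite [RHS]mulr_sumr !mxE [LHS]mulr_suml; apply: eq_bigr => k _.
  rewrite [RHS]mulr_sumr [LHS]mulr_sumr; apply: eq_bigr => l _.
  rewrite /c /m !mxE.
  have := @key2 R d sigma hsigma (x i) (x j) (x k) (x l); rewrite /= => e.
  transitivity (a i * b j * a k * b l *
    (gauss (Num.sqrt 2 * sigma) (x i) (x k) * gauss (Num.sqrt 2 * sigma) (x k) (x j) *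
     gauss (Num.sqrt 2 * sigma) (x j) (x l) * gauss (Num.sqrt 2 * sigma) (x l) (x i))).
    ring.
  rewrite -e; ring.
apply: eq_bigr => i _; rewrite /Fi (@ip_sum R _ _ H ip HR _ _ (fun j z => c i j * gauss s2 (m i j) z)) //; last first.
  by move=> j; exact: (rkhs_scale HR _ (rkhs_section HR _)).
apply: eq_bigr => j _.
rewrite (@ip_scale R _ _ H ip HR) //; last exact: (rkhs_section HR).
by rewrite (rkhs_sym HR) ?(rkhs_reproducing HR) //; exact: (rkhs_section HR).
Qed.
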